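(* Let $\eta$ be a (sufficiently regular, e.g. classical) solution of the uniformly compressing curve-shortening flow described below and let $M(t)=\frac12\int_0^1|\eta(t,s)|^2\,ds$ be its $L^2$-mass. Then $\partial_t M(t)=-1$.
   Context: $\mathbb S^1=\mathbb R/\mathbb Z$, $d\ge2$, $L(\eta)=\int_0^1|\partial_s\eta|\,ds$. The flow: $\eta:[0,t^\ast)\times\mathbb S^1\to\mathbb R^d$ with $\int_0^1\eta(t,s)\,ds=0$ and $|\partial_s\eta(t,s)|=L(t)>0$ for all $(t,s)$, satisfying $\partial_t\eta=L(t)^{-2}\partial_s(\tilde\sigma\partial_s\eta)$, where $\tilde\sigma$ satisfies $\partial_{ss}\tilde\sigma-L^{-2}\tilde\sigma|\partial_{ss}\eta|^2=-L^{-2}\int_0^1\tilde\sigma|\partial_{ss}\eta|^2\,ds$ and $\int_0^1\tilde\sigma(t,s)\,ds=1$ for all $t$. *)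

(* Defs.v *)
From Stdlib Require Import Reals.
From Coquelicot Require Import Coquelicot.
Open Scope R_scope.

(* Vectors of R^d are represented as functions nat -> R; only the
   components i < d are meaningful. *)
Fixpoint sum_lt (n : nat) (f : nat -> R) : R :=
  match n with O => 0 | S m => sum_lt m f + f m end.

Definition sqnorm (d : nat) (v : nat -> R) : R := sum_lt d (fun i => v i ^ 2).
Definition vnorm (d : nat) (v : nat -> R) : R := sqrt (sqnorm d v).

Definition dt_ (eta : R -> R -> nat -> R) (i : nat) (t s : R) : R :=
  Derive (fun t' => eta t' s i) t.
Definition ds_ (eta : R -> R -> nat -> R) (i : nat) (t s : R) : R :=
  Derive (fun s' => eta t s' i) s.
Definition dss_ (eta : R -> R -> nat -> R) (i : nat) (t s : R) : R :=
  Derive (fun s' => ds_ eta i t s') s.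

Definition sds (sig : R -> R -> R) (t s : R) : R := Derive (fun s' => sig t s') s.
Definition sdss (sig : R -> R -> R) (t s : R) : R := Derive (fun s' => sds sig t s') s.

Definition curve_length (d : nat) (eta : R -> R -> nat -> R) (t : R) : R :=
  RInt (fun s => vnorm d (fun i => ds_ eta i t s)) 0 1.

Definition mass (d : nat) (eta : R -> R -> nat -> R) (t : R) : R :=
  / 2 * RInt (fun s => sqnorm d (eta t s)) 0 1.

(* Classical solution on [0, tstar) x S^1 of the uniformly compressing
   curve-shortening flow with tension sigma. S^1 = R/Z is encoded by
   1-periodicity in s. *)
Definition ucsf_classical_solution (d : nat) (tstar : Rbar)
    (eta : R -> R -> nat -> R) (sig : R -> R -> R) : Prop :=
  let L := curve_length d eta in
  (forall t s i, 0 <= t -> Rbar_lt t tstar ->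
      eta t (s + 1) i = eta t s i /\ sig t (s + 1) = sig t s) /\
  (forall t s i, 0 <= t -> Rbar_lt t tstar -> (i < d)%nat ->
      ex_derive (fun s' => eta t s' i) s /\
      ex_derive (fun s' => ds_ eta i t s') s /\
      ex_derive (fun s' => sig t s') s /\
      ex_derive (fun s' => sds sig t s') s /\
      ex_derive (fun s' => sig t s' * ds_ eta i t s') s) /\
  (forall t s i, 0 < t -> Rbar_lt t tstar -> (i < d)%nat ->
      ex_derive (fun t' => eta t' s i) t /\
      continuity_2d_pt (fun t' s' => eta t' s' i) t s /\
      continuity_2d_pt (fun t' s' => dt_ eta i t' s') t s /\
      continuity_2d_pt (fun t' s' => ds_ eta i t' s') t s /\
      continuity_2d_pt (fun t' s' => dss_ eta i t' s') t s /\
      continuity_2d_pt sig t s /\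
      continuity_2d_pt (fun t' s' => sds sig t' s') t s) /\
  (forall t i, 0 <= t -> Rbar_lt t tstar -> (i < d)%nat ->
      RInt (fun s => eta t s i) 0 1 = 0) /\
  (forall t s, 0 <= t -> Rbar_lt t tstar ->
      vnorm d (fun i => ds_ eta i t s) = L t /\ 0 < L t) /\
  (forall t s i, 0 < t -> Rbar_lt t tstar -> (i < d)%nat ->
      dt_ eta i t s = / (L t ^ 2) * Derive (fun s' => sig t s' * ds_ eta i t s') s) /\
  (forall t s, 0 <= t -> Rbar_lt t tstar ->
      sdss sig t s - / (L t ^ 2) * sig t s * sqnorm d (fun i => dss_ eta i t s)
      = - / (L t ^ 2) * RInt (fun u => sig t u * sqnorm d (fun i => dss_ eta i t u)) 0 1) /\
  (forall t, 0 <= t -> Rbar_lt t tstar -> RInt (fun s => sig t s) 0 1 = 1).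

(* Main.v *)
Require Import Defs.
From Stdlib Require Import Reals Lra Lia.
From Coquelicot Require Import Coquelicot.
Open Scope R_scope.

Lemma sum_lt_ge0 n f : (forall i, 0 <= f i) -> 0 <= sum_lt n f.
Proof. intro H; induction n; simpl; [lra| specialize (H n); lra]. Qed.

Lemma sum_lt_ext n f g : (forall i, (i < n)%nat -> f i = g i) -> sum_lt n f = sum_lt n g.
Proof. intro H; induction n; simpl; auto. rewrite IHn by (intros; apply H; lia). rewrite H; auto. Qed.

Lemma sum_lt_scal c n f : sum_lt n (fun i => c * f i) = c * sum_lt n f.
Proof. induction n; simpl; [ring| rewrite IHn; ring]. Qed.

Lemma sum_lt_mult_r c n f : sum_lt n (fun i => f i * c) = sum_lt n f * c.
Proof. induction n; simpl; [ring| rewrite IHn; ring]. Qed.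

Lemma is_RInt_sum_lt n (g : nat -> R -> R) (I : nat -> R) a b :
  (forall i, (i < n)%nat -> is_RInt (g i) a b (I i)) ->
  is_RInt (fun s => sum_lt n (fun i => g i s)) a b (sum_lt n I).
Proof.
  intro H; induction n; simpl.
  - apply is_RInt_ext with (fun _ => 0). { intros; reflexivity. }
    pose proof (@is_RInt_const R_NormedModule a b 0) as Hc.
    replace (scal (b - a) (0:R_NormedModule)) with 0 in Hc
      by (unfold scal; simpl; unfold mult; simpl; ring).
    exact Hc.
  - apply (is_RInt_plus (fun s => sum_lt n (fun i => g i s)) (g n)).
    + apply IHn; intros; apply H; lia.
    + apply H; lia.
Qed.

Lemma cont_Rmult {U : UniformSpace} (f g : U -> R) x :
  continuous f x -> continuous g x -> continuous (fun y => f y * g y) x.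
Proof. intros; exact (continuous_mult f g x H H0). Qed.

Lemma cont_Rplus {U : UniformSpace} (f g : U -> R) x :
  continuous f x -> continuous g x -> continuous (fun y => f y + g y) x.
Proof. intros; exact (continuous_plus f g x H H0). Qed.

Lemma continuous_sum_lt {U : UniformSpace} n (g : nat -> U -> R) x :
  (forall i, (i < n)%nat -> continuous (g i) x) ->
  continuous (fun y => sum_lt n (fun i => g i y)) x.
Proof.
  intro H; induction n; simpl.
  - apply continuous_const.
  - apply cont_Rplus. apply IHn; intros; apply H; lia. apply H; lia.
Qed.

Lemma is_derive_sum_lt n (g : nat -> R -> R) g' x :
  (forall i, (i < n)%nat -> is_derive (g i) x (g' i)) ->
  is_derive (fun y => sum_lt n (fun i => g i y)) x (sum_lt n g').
Proof.
  intro H; induction n; simpl.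
  - exact (is_derive_const (K:=R_AbsRing) 0 x).
  - apply (is_derive_plus (fun y => sum_lt n (fun i => g i y)) (g n)).
    apply IHn; intros; apply H; lia. apply H; lia.
Qed.

Lemma cont2_restr F x y : continuity_2d_pt F x y -> continuous (fun s => F x s) y.
Proof.
  intro H. apply continuity_2d_pt_filterlim in H.
  apply (continuous_comp_2 (fun _ : R => x) (fun s : R => s) F y).
  apply continuous_const. apply continuous_id. exact H.
Qed.

Lemma cont2_to F x y : continuity_2d_pt F x y ->
  continuous (fun z : R * R => F (fst z) (snd z)) (x, y).
Proof. intro H. apply continuity_2d_pt_filterlim in H. exact H. Qed.

Lemma Derive_per (f : R -> R) : (forall s, f (s + 1) = f s) -> ex_derive f 1 ->
  Derive f 1 = Derive f 0.
Proof.
  intros Hp Hd.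
  rewrite (Derive_ext f (fun s => f (s + 1)) 0) by (intro; rewrite Hp; auto).
  rewrite (Derive_comp f (fun s => s + 1) 0).
  - replace (Derive (fun s => s + 1) 0) with 1.
    rewrite Rplus_0_l; ring.
    symmetry; apply is_derive_unique. auto_derive; auto; ring.
  - rewrite Rplus_0_l; auto.
  - auto_derive; auto.
Qed.

Theorem proposition2p6 (d : nat) (tstar : Rbar)
    (eta : R -> R -> nat -> R) (sig : R -> R -> R) :
  (2 <= d)%nat ->
  Rbar_lt 0 tstar ->
  ucsf_classical_solution d tstar eta sig ->
  forall t : R, 0 < t -> Rbar_lt t tstar ->
    is_derive (mass d eta) t (-1).
Proof.
  intros Hd H0 Hsol t Ht0 Htt.
  unfold ucsf_classical_solution in Hsol; cbv zeta in Hsol.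
  destruct Hsol as (Hper & Hregs & Hregt & Hmean & Hspeed & Hflow & Htens & Hnorm).
  assert (derS : forall y s, 0 < y -> Rbar_lt y tstar ->
    is_derive (fun u => sqnorm d (eta u s)) y
      (sum_lt d (fun i => 2 * eta y s i * dt_ eta i y s))).
  { intros y s Hy0 Hyt. unfold sqnorm.
    apply (is_derive_sum_lt d (fun i u => eta u s i ^ 2)).
    intros i Hi. destruct (Hregt y s i Hy0 Hyt Hi) as [Hex _].
    pose proof (is_derive_pow (fun u => eta u s i) 2 y _ (Derive_correct _ _ Hex)) as Hp.
    eapply is_derive_ext. intro; reflexivity.
    replace (2 * eta y s i * dt_ eta i y s) with
      (INR 2 * Derive (fun t' => eta t' s i) y * eta y s i ^ Init.Nat.pred 2).
    exact Hp. unfold dt_; simpl; ring. }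
  assert (Hloc : locally t (fun y => 0 < y /\ Rbar_lt y tstar)).
  { apply (locally_interval _ t 0 tstar). simpl; exact Ht0. exact Htt.
    intros y Hy1 Hy2; split; [exact Hy1 | exact Hy2]. }
  set (L := curve_length d eta t).
  assert (Hint : is_RInt (fun s => sum_lt d (fun i => 2 * eta t s i * dt_ eta i t s)) 0 1 (-2)).
  { assert (Ht0' : 0 <= t) by lra.
    assert (HL : 0 < L) by exact (proj2 (Hspeed t 0 Ht0' Htt)).
    assert (Hsq : forall s, sqnorm d (fun i => ds_ eta i t s) = L ^ 2).
    { intro s. destruct (Hspeed t s Ht0' Htt) as [Hv _]. unfold vnorm in Hv.
      fold L in Hv. rewrite <- Hv. simpl. rewrite Rmult_1_r.
      rewrite sqrt_sqrt; auto. unfold sqnorm; apply sum_lt_ge0; intro; apply pow2_ge_0. }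
    set (J := fun i => RInt (fun s => ds_ eta i t s * (sig t s * ds_ eta i t s)) 0 1).
    assert (HJ : forall i, (i < d)%nat ->
      is_RInt (fun s => ds_ eta i t s * (sig t s * ds_ eta i t s)) 0 1 (J i)).
    { intros i Hi. apply (@RInt_correct R_CompleteNormedModule).
      apply (@ex_RInt_continuous R_CompleteNormedModule). intros s _.
      destruct (Hregt t s i Ht0 Htt Hi) as (_ & _ & _ & Cds & _ & Cs & _).
      apply cont_Rmult. exact (cont2_restr _ _ _ Cds).
      apply cont_Rmult. exact (cont2_restr _ _ _ Cs). exact (cont2_restr _ _ _ Cds). }
    assert (Hi : forall i, (i < d)%nat ->
      is_RInt (fun s => 2 * eta t s i * dt_ eta i t s) 0 1 (-2 / L ^ 2 * J i)).
    { intros i Hi.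
      assert (IBP := @is_RInt_scal_derive_r R_CompleteNormedModule
        (fun s => eta t s i) (fun s => sig t s * ds_ eta i t s)
        (fun s => ds_ eta i t s) (fun s => L ^ 2 * dt_ eta i t s) 0 1 (J i)).
      destruct (Hper t 0 i Ht0' Htt) as [Pe Ps]. rewrite Rplus_0_l in Pe, Ps.
      assert (Pd : ds_ eta i t 1 = ds_ eta i t 0).
      { unfold ds_. apply Derive_per.
        intro s; exact (proj1 (Hper t s i Ht0' Htt)).
        exact (proj1 (Hregs t 1 i Ht0' Htt Hi)). }
      cbv beta in IBP. rewrite Pe, Ps, Pd in IBP.
      assert (IBP2 : is_RInt (fun s => eta t s i * (L ^ 2 * dt_ eta i t s)) 0 1 (- J i)).
      { eapply is_RInt_ext. 2: { replace (- J i) with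
          (minus (minus (scal (eta t 0 i) (sig t 0 * ds_ eta i t 0))
                        (scal (eta t 0 i) (sig t 0 * ds_ eta i t 0))) (J i)).
          apply IBP.
          - intros s _. apply Derive_correct. exact (proj1 (Hregs t s i Ht0' Htt Hi)).
          - intros s _. destruct (Hregs t s i Ht0' Htt Hi) as (_ & _ & _ & _ & Hg).
            replace (L ^ 2 * dt_ eta i t s) with
              (Derive (fun s' => sig t s' * ds_ eta i t s') s).
            apply Derive_correct; exact Hg.
            rewrite (Hflow t s i Ht0 Htt Hi). fold L. field. lra.
          - intros s _. destruct (Hregt t s i Ht0 Htt Hi) as (_ & _ & _ & Cds & _).
            exact (cont2_restr _ _ _ Cds).
          - intros s _. destruct (Hregt t s i Ht0 Htt Hi) as (_ & _ & Cdt & _).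
            apply cont_Rmult. apply continuous_const. exact (cont2_restr _ _ _ Cdt).
          - apply HJ; auto.
          - unfold minus, plus, opp, scal; simpl; unfold mult; simpl. ring. }
        intros; reflexivity. }
      apply (is_RInt_scal _ _ _ (2 / L ^ 2)) in IBP2.
      eapply is_RInt_ext. 2: { replace (-2 / L ^ 2 * J i) with (scal (2 / L ^ 2) (- J i)).
        exact IBP2. unfold scal; simpl; unfold mult; simpl; field. lra. }
      intros s _. unfold scal; simpl; unfold mult; simpl. field. lra. }
    assert (HsumJ : sum_lt d J = L ^ 2).
    { assert (H1 := is_RInt_sum_lt d _ J 0 1 HJ).
      assert (Hs : is_RInt (fun s => sig t s) 0 1 1).
      { rewrite <- (Hnorm t Ht0' Htt) at 2. apply (@RInt_correct R_CompleteNormedModule).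
        apply (@ex_RInt_continuous R_CompleteNormedModule). intros s _.
        destruct (Hregt t s 0%nat Ht0 Htt ltac:(lia)) as (_ & _ & _ & _ & _ & Cs & _).
        exact (cont2_restr _ _ _ Cs). }
      apply (is_RInt_scal _ _ _ (L ^ 2)) in Hs.
      rewrite <- (is_RInt_unique _ _ _ _ H1).
      assert (Hs2 : is_RInt (fun y => L ^ 2 * sig t y) 0 1 (L ^ 2)).
      { unfold scal in Hs; simpl in Hs; unfold mult in Hs; simpl in Hs.
        replace (L ^ 2) with (L * (L * 1) * 1) by ring.
        eapply is_RInt_ext; [| exact Hs]. intros; simpl; ring. }
      apply is_RInt_unique. eapply is_RInt_ext; [| exact Hs2]. intros s _. symmetry.
      rewrite (sum_lt_ext d _ (fun i => sig t s * (ds_ eta i t s ^ 2))).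
      rewrite sum_lt_scal. fold (sqnorm d (fun i => ds_ eta i t s)). rewrite Hsq.
      unfold scal; simpl; unfold mult; simpl; ring.
      intros; simpl; ring. }
    assert (H2 := is_RInt_sum_lt d _ _ 0 1 Hi). simpl in H2.
    rewrite sum_lt_scal, HsumJ in H2.
    replace (-2) with (-2 / L ^ 2 * L ^ 2) by (field; lra). exact H2. }
  unfold mass.
  replace (-1) with (scal (/2) (-2)) by (unfold scal; simpl; unfold mult; simpl; field).
  apply (is_derive_scal (fun x => RInt (fun s => sqnorm d (eta x s)) 0 1)).
  assert (HD : RInt (fun s => Derive (fun u => sqnorm d (eta u s)) t) 0 1 = -2).
  { apply is_RInt_unique. eapply is_RInt_ext. 2: exact Hint.
    intros s _. symmetry; apply is_derive_unique; apply derS; auto. }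
  rewrite <- HD.
  apply is_derive_RInt_param.
  - eapply filter_imp. 2: exact Hloc. intros y [Hy1 Hy2] s _.
    eexists; apply derS; auto.
  - intros s _. apply continuity_2d_pt_filterlim.
    change (continuous (fun z : R * R => Derive (fun u => sqnorm d (eta u (snd z))) (fst z)) (t, s)).
    apply (continuous_ext_loc _
      (fun z : R * R => sum_lt d (fun i => 2 * eta (fst z) (snd z) i * dt_ eta i (fst z) (snd z)))).
    + assert (Hl2 : locally (t, s) (fun z : R * R => 0 < fst z /\ Rbar_lt (fst z) tstar)).
      { exact (continuous_fst t s _ Hloc). }
      eapply filter_imp. 2: exact Hl2. intros z [Hz1 Hz2].
      symmetry; apply is_derive_unique; apply derS; auto.
    + apply continuous_sum_lt. intros i Hi.
      destruct (Hregt t s i Ht0 Htt Hi) as (_ & Ce & Cdt & _).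
      apply cont_Rmult. apply cont_Rmult. apply continuous_const.
      exact (cont2_to _ _ _ Ce). exact (cont2_to _ _ _ Cdt).
  - eapply filter_imp. 2: exact Hloc. intros y [Hy1 Hy2].
    apply (@ex_RInt_continuous R_CompleteNormedModule). intros s _. unfold sqnorm.
    apply continuous_sum_lt. intros i Hi.
    destruct (Hregt y s i Hy1 Hy2 Hi) as (_ & Ce & _).
    simpl. apply cont_Rmult. exact (cont2_restr _ _ _ Ce).
    apply cont_Rmult. exact (cont2_restr _ _ _ Ce). apply continuous_const.
Qed.
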